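(* Let $\mathcal{A}$ be an alternative $W^{*}$-factor, $\mathcal{B}$ an alternative complex $\ast$-algebra, and $\Phi:\mathcal{A}\to\mathcal{B}$ a bijection. Let $p_{1}\in\mathcal{A}$ be a projection with $p_{1}\neq 1_{\mathcal{A}}$, $p_{2}=1_{\mathcal{A}}-p_{1}$, and $\mathcal{A}_{ij}=p_{i}\mathcal{A}p_{j}$. Let $a_{12},b_{12}\in\mathcal{A}_{12}$ and $c_{21},d_{21}\in\mathcal{A}_{21}$. If $\Phi$ preserves product $ab+ba^{*}$, then (i) $\Phi(a_{12}b_{12}+a_{12}^{*})=\Phi(a_{12}b_{12})+\Phi(a_{12}^{*})$ and (ii) $\Phi(c_{21}d_{21}+c_{21}^{*})=\Phi(c_{21}d_{21})+\Phi(c_{21}^{*})$. If $\Phi$ preserves product $ab-ba^{*}$, then (i) $\Phi(a_{12}b_{12}-a_{12}^{*})=\Phi(a_{12}b_{12})+\Phi(-a_{12}^{*})$ and (ii) $\Phi(c_{21}d_{21}-c_{21}^{*})=\Phi(c_{21}d_{21})+\Phi(-c_{21}^{*})$.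
   Context: An alternative $W^{*}$-factor is a prime alternative $C^{*}$-algebra (complete normed alternative complex $\ast$-algebra with $\|a^{*}a\|=\|a\|^{2}$) that is a dual Banach space; it is unital. A projection is a nonzero self-adjoint idempotent. $\mathcal{A}_{ij}$ are the Peirce components with respect to $p_{1}$. $\Phi$ preserves product $ab+ba^{*}$ (resp. $ab-ba^{*}$) if $\Phi(ab+ba^{*})=\Phi(a)\Phi(b)+\Phi(b)\Phi(a)^{*}$ (resp. $\Phi(ab-ba^{*})=\Phi(a)\Phi(b)-\Phi(b)\Phi(a)^{*}$) for all $a,b\in\mathcal{A}$. *)

(* Defs.v *)
From HB Require Import structures.
From mathcomp Require Import all_boot all_order all_algebra.
From mathcomp Require Import complex.
From mathcomp Require Import all_classical all_reals all_analysis.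
Set Implicit Arguments. Unset Strict Implicit. Unset Printing Implicit Defensive.
Import Order.TTheory GRing.Theory Num.Theory.
Import numFieldTopology.Exports numFieldNormedType.Exports.
Local Open Scope ring_scope.
Local Open Scope complex_scope.

Record altStarAlg (R : realType) (V : lmodType R[i]) := AltStarAlg {
  amul : V -> V -> V;
  astar : V -> V;
  amulDl : forall (k : R[i]) (x y z : V),
      amul (k *: x + y) z = k *: amul x z + amul y z;
  amulDr : forall (k : R[i]) (x y z : V),
      amul x (k *: y + z) = k *: amul x y + amul x z;
  amul_altl : forall x y : V, amul (amul x x) y = amul x (amul x y);
  amul_altr : forall x y : V, amul (amul y x) x = amul y (amul x x);
  astarD : forall x y : V, astar (x + y) = astar x + astar y;
  astarZ : forall (k : R[i]) (x : V), astar (k *: x) = k^* *: astar x;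
  astarK : forall x : V, astar (astar x) = x;
  astarM : forall x y : V, astar (amul x y) = amul (astar y) (astar x)
}.

Section Defs.
Variables (R : realType).

Definition is_ideal (V : lmodType R[i]) (A : altStarAlg V) (I : set V) :=
  [/\ I 0,
      (forall x y, I x -> I y -> I (x + y)),
      (forall (k : R[i]) x, I x -> I (k *: x)),
      (forall a x, I x -> I (amul A a x)) &
      (forall a x, I x -> I (amul A x a))].

Definition is_prime (V : lmodType R[i]) (A : altStarAlg V) :=
  forall I J : set V, is_ideal A I -> is_ideal A J ->
    (forall x y, I x -> J y -> amul A x y = 0) ->
    (forall x, I x -> x = 0) \/ (forall y, J y -> y = 0).

(** V is (isometrically isomorphic to) the dual of a normed space X:
    there is a linear bijection from V onto the continuous linear
    functionals on X, which is isometric for the operator norm. *)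
Definition is_dual_banach (V : normedModType R[i]) :=
  exists (X : normedModType R[i]) (phi : V -> X -> R[i]),
    [/\ (forall v (k : R[i]) x y, phi v (k *: x + y) = k * phi v x + phi v y),
        (forall v, continuous (phi v : X -> (R[i] : numFieldType))),
        (forall (k : R[i]) v w, phi (k *: v + w) = (fun x => k * phi v x + phi w x)),
        injective phi &
        (forall f : X -> R[i],
            (forall (k : R[i]) x y, f (k *: x + y) = k * f x + f y) ->
            continuous (f : X -> (R[i] : numFieldType)) -> exists v, phi v = f)] /\
        (forall v, (forall x, `|x| <= 1 -> `|phi v x| <= `|v|) /\
                   (forall e : R[i], 0 < e ->
                      exists x, `|x| <= 1 /\ `|v| - e < `|phi v x|)).

End Defs.

(** An alternative W*-factor: a prime alternative C*-algebra (complete normed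
    alternative complex *-algebra with the C*-identity) that is a dual Banach
    space. *)
Record altWfactor (R : realType) (V : completeNormedModType R[i]) := AltWfactor {
  wf_alg :> altStarAlg V;
  wf_one : V;
  wf_one_neq0 : wf_one <> 0;
  wf_mul1l : forall x, amul wf_alg wf_one x = x;
  wf_mul1r : forall x, amul wf_alg x wf_one = x;
  wf_normM : forall x y : V, `|amul wf_alg x y| <= `|x| * `|y|;
  wf_cstar : forall x : V, `|amul wf_alg (astar wf_alg x) x| = `|x| ^+ 2;
  wf_prime : is_prime wf_alg;
  wf_dual : is_dual_banach V
}.

Definition is_projection (R : realType) (V : lmodType R[i]) (A : altStarAlg V) (p : V) :=
  [/\ p <> 0, astar A p = p & amul A p p = p].

Definition peirce (R : realType) (V : lmodType R[i]) (A : altStarAlg V) (p q : V) : set V :=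
  [set x | exists a, x = amul A (amul A p a) q].

Definition preserves_jplus (R : realType) (V W : lmodType R[i])
  (A : altStarAlg V) (B : altStarAlg W) (Phi : V -> W) :=
  forall a b, Phi (amul A a b + amul A b (astar A a)) =
              amul B (Phi a) (Phi b) + amul B (Phi b) (astar B (Phi a)).

Definition preserves_jminus (R : realType) (V W : lmodType R[i])
  (A : altStarAlg V) (B : altStarAlg W) (Phi : V -> W) :=
  forall a b, Phi (amul A a b - amul A b (astar A a)) =
              amul B (Phi a) (Phi b) - amul B (Phi b) (astar B (Phi a)).

(* Main.v *)
Require Import Defs.
From HB Require Import structures.
From mathcomp Require Import all_boot all_order all_algebra.
From mathcomp Require Import complex.
From mathcomp Require Import all_classical all_reals all_analysis.
Import Order.TTheory GRing.Theory Num.Theory.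
Local Open Scope ring_scope.
Local Open Scope complex_scope.
Set Implicit Arguments. Unset Strict Implicit.

Lemma swap4 (G : zmodType) (u v w t : G) : u + v + (w + t) = (v + w) + (u + t).
Proof. by rewrite (addrC u v) (addrACA v u w t). Qed.

Lemma cancel4 (G : zmodType) (a b c d p q : G) :
  a + p + (q + d) = a + b + (c + d) -> p + q = b + c.
Proof. by rewrite (swap4 a p q d) (swap4 a b c d) => /addIr. Qed.

Section Lin.
Variables (R : realType) (U : lmodType R[i]) (A : altStarAlg U).
Local Notation m := (amul A).
Local Notation st := (astar A).

Lemma mDl x y z : m (x + y) z = m x z + m y z.
Proof. by have := amulDl A 1 x y z; rewrite !scale1r. Qed.
Lemma mDr x y z : m z (x + y) = m z x + m z y.
Proof. by have := amulDr A 1 z x y; rewrite !scale1r. Qed.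
Lemma m0l z : m 0 z = 0.
Proof. by apply/(addrI (m 0 z)); rewrite -mDl !addr0. Qed.
Lemma m0r z : m z 0 = 0.
Proof. by apply/(addrI (m z 0)); rewrite -mDr !addr0. Qed.
Lemma mZl k x z : m (k *: x) z = k *: m x z.
Proof. by have := amulDl A k x 0 z; rewrite addr0 m0l addr0. Qed.
Lemma mZr k x z : m z (k *: x) = k *: m z x.
Proof. by have := amulDr A k z x 0; rewrite addr0 m0r addr0. Qed.
Lemma mNl x z : m (- x) z = - m x z.
Proof. by rewrite -scaleN1r mZl scaleN1r. Qed.
Lemma mNr x z : m z (- x) = - m z x.
Proof. by rewrite -scaleN1r mZr scaleN1r. Qed.
Lemma mBl x y z : m (x - y) z = m x z - m y z.
Proof. by rewrite mDl mNl. Qed.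
Lemma mBr x y z : m z (x - y) = m z x - m z y.
Proof. by rewrite mDr mNr. Qed.
Lemma st0 : st 0 = 0.
Proof. by apply/(addrI (st 0)); rewrite -astarD !addr0. Qed.
Lemma stN x : st (- x) = - st x.
Proof. by apply/(addrI (st x)); rewrite -astarD !subrr st0. Qed.
Lemma stB x y : st (x - y) = st x - st y.
Proof. by rewrite astarD stN. Qed.

Lemma lin_l x z y : m (m x z) y + m (m z x) y = m x (m z y) + m z (m x y).
Proof.
have h := amul_altl A (x + z) y.
rewrite !(mDl, mDr) !amul_altl in h.
exact: (cancel4 h).
Qed.

Lemma lin_r y x z : m (m y x) z + m (m y z) x = m y (m x z) + m y (m z x).
Proof.
have h := amul_altr A (x + z) y.
rewrite !(mDl, mDr) !amul_altr in h.
rewrite (addrC (m (m y x) z)); exact: (cancel4 h).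
Qed.

End Lin.

Definition c11 (R : realType) (V : lmodType R[i]) (A : altStarAlg V) (e x : V) :=
  amul A e x = x /\ amul A x e = x.
Definition c12 (R : realType) (V : lmodType R[i]) (A : altStarAlg V) (e x : V) :=
  amul A e x = x /\ amul A x e = 0.
Definition c21 (R : realType) (V : lmodType R[i]) (A : altStarAlg V) (e x : V) :=
  amul A e x = 0 /\ amul A x e = x.
Definition c22 (R : realType) (V : lmodType R[i]) (A : altStarAlg V) (e x : V) :=
  amul A e x = 0 /\ amul A x e = 0.

Section Peirce.
Variables (R : realType) (U : lmodType R[i]) (A : altStarAlg U).
Variables (one : U) (h1l : forall x, amul A one x = x) (h1r : forall x, amul A x one = x).
Local Notation m := (amul A).
Local Notation st := (astar A).

Lemma st1 : st one = one.
Proof.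
have hl : forall y, m (st one) y = y.
  move=> y; have := astarM A (st y) one.
  by rewrite h1r !astarK.
by rewrite -[RHS]hl h1r.
Qed.

Variables (e : U) (est : st e = e) (ee : m e e = e).

Lemma Lalt x : m e (m e x) = m e x.
Proof. by rewrite -amul_altl ee. Qed.
Lemma Ralt x : m (m x e) e = m x e.
Proof. by rewrite amul_altr ee. Qed.
Lemma flex x : m e (m x e) = m (m e x) e.
Proof.
have h := lin_l A e x e.
rewrite amul_altr ee in h.
by apply/esym/(addIr (m x e)).
Qed.

Lemma p2l x : m (one - e) x = x - m e x.
Proof. by rewrite mBl h1l. Qed.
Lemma p2r x : m x (one - e) = x - m x e.
Proof. by rewrite mBr h1r. Qed.

Lemma st_c11 x : c11 A e x -> c11 A e (st x).
Proof. by case=> h1 h2; split; rewrite -{1}est -astarM ?h1 ?h2. Qed.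
Lemma st_c12 x : c12 A e x -> c21 A e (st x).
Proof. by case=> h1 h2; split; rewrite -{1}est -astarM ?h1 ?h2 ?st0. Qed.
Lemma st_c21 x : c21 A e x -> c12 A e (st x).
Proof. by case=> h1 h2; split; rewrite -{1}est -astarM ?h1 ?h2 ?st0. Qed.
Lemma st_c22 x : c22 A e x -> c22 A e (st x).
Proof. by case=> h1 h2; split; rewrite -{1}est -astarM ?h1 ?h2 ?st0. Qed.

Lemma prod_12_12 x y : c12 A e x -> c12 A e y -> c21 A e (m x y).
Proof.
case=> hx1 hx2 [hy1 hy2]; split.
  have h := lin_l A e x y.
  rewrite hx1 hx2 hy1 m0l addr0 in h.
  by apply/(addIr (m x y)); rewrite add0r.
have h := lin_r A x y e.
by rewrite hx2 hy1 hy2 m0l m0r addr0 add0r in h.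
Qed.

Lemma prod_12_21 x y : c12 A e x -> c21 A e y -> c11 A e (m x y).
Proof.
case=> hx1 hx2 [hy1 hy2]; split.
  have h := lin_l A e x y.
  by rewrite hx1 hx2 hy1 m0l m0r !addr0 in h.
have h := lin_r A x y e.
by rewrite hx2 hy1 hy2 m0l m0r !addr0 in h.
Qed.

Lemma decomp S : exists S11 S12 S21 S22,
  [/\ c11 A e S11, c12 A e S12, c21 A e S21, c22 A e S22 &
      S = S11 + S12 + S21 + S22].
Proof.
set c := m (m e S) e.
have ec : m e c = c by rewrite /c flex Lalt.
have ce : m c e = c by rewrite /c Ralt.
exists c, (m e S - c), (m S e - c), (S - (c + (m e S - c) + (m S e - c))).
have k1 : c + (m e S - c) = m e S by rewrite addrC subrK.
have k2 : c + (m S e - c) = m S e by rewrite addrC subrK.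
have e12 : m e (m e S - c) = m e S - c by rewrite mBr Lalt ec.
have e12' : m (m e S - c) e = 0 by rewrite mBl ce -/c subrr.
have e21 : m e (m S e - c) = 0.
  by rewrite mBr flex ec -/c subrr.
have e21' : m (m S e - c) e = m S e - c by rewrite mBl Ralt ce.
split => //.
- split.
  + by rewrite mBr mDr mDr ec e12 e21 k1 addr0 subrr.
  + by rewrite mBl mDl mDl ce e12' e21' addr0 k2 subrr.
- by rewrite [RHS]addrC subrK.
Qed.

Lemma st_p2 : st (one - e) = one - e.
Proof. by rewrite stB st1 est. Qed.
Lemma p2p2 : m (one - e) (one - e) = one - e.
Proof. by rewrite p2l p2r ee subrr subr0. Qed.

Lemma c11_p2 x : c11 A e x -> c22 A (one - e) x.
Proof. by case=> h1 h2; split; rewrite ?p2l ?p2r ?h1 ?h2 subrr. Qed.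
Lemma c12_p2 x : c12 A e x -> c21 A (one - e) x.
Proof. by case=> h1 h2; split; rewrite ?p2l ?p2r ?h1 ?h2 ?subrr ?subr0. Qed.
Lemma c21_p2 x : c21 A e x -> c12 A (one - e) x.
Proof. by case=> h1 h2; split; rewrite ?p2l ?p2r ?h1 ?h2 ?subrr ?subr0. Qed.
Lemma c22_p2 x : c22 A e x -> c11 A (one - e) x.
Proof. by case=> h1 h2; split; rewrite ?p2l ?p2r ?h1 ?h2 ?subrr ?subr0. Qed.

Lemma peirce_c12 x : peirce A e (one - e) x -> c12 A e x.
Proof.
case=> a ->; split.
  by rewrite p2r mBr Lalt flex Lalt.
by rewrite p2r mBl Ralt subrr.
Qed.

End Peirce.

Lemma regroup (R : realType) (G : lmodType R[i]) (k : R[i]) (a1 a2 a3 a4 b1 b2 b3 b4 : G) :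
  a1 + a2 + a3 + a4 + k *: (b1 + b2 + b3 + b4) =
  (a1 + k *: b1) + (a2 + k *: b2) + (a3 + k *: b3) + (a4 + k *: b4).
Proof.
rewrite !scalerDr.
rewrite (addrACA (a1 + a2 + a3) a4 (k *: b1 + k *: b2 + k *: b3) (k *: b4)).
rewrite (addrACA (a1 + a2) a3 (k *: b1 + k *: b2) (k *: b3)).
by rewrite (addrACA a1 a2 (k *: b1) (k *: b2)).
Qed.

Lemma rev4 (G : zmodType) (a b c d : G) : a + b + c + d = d + c + b + a.
Proof. by rewrite (addrC (a + b + c) d) (addrC (a + b) c) (addrC a b) !addrA. Qed.

Lemma dbl_inj (R : realType) (G : lmodType R[i]) (v w : G) : v + v = w + w -> v = w.
Proof.
move=> h; apply: (@scalerI _ _ (2%:R : R[i])); first by rewrite pnatr_eq0.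
by rewrite !scaler_nat !mulr2n.
Qed.

Section Cl.
Variables (R : realType) (U : lmodType R[i]) (A : altStarAlg U) (e : U).
Local Notation m := (amul A).
Lemma c11D x y : c11 A e x -> c11 A e y -> c11 A e (x + y).
Proof. by case=> h1 h2 [h3 h4]; split; rewrite ?mDl ?mDr ?h1 ?h2 ?h3 ?h4. Qed.
Lemma c11Z k x : c11 A e x -> c11 A e (k *: x).
Proof. by case=> h1 h2; split; rewrite ?mZl ?mZr ?h1 ?h2. Qed.
Lemma c21D x y : c21 A e x -> c21 A e y -> c21 A e (x + y).
Proof. by case=> h1 h2 [h3 h4]; split; rewrite ?mDl ?mDr ?h1 ?h2 ?h3 ?h4 ?addr0. Qed.
Lemma c21Z k x : c21 A e x -> c21 A e (k *: x).
Proof. by case=> h1 h2; split; rewrite ?mZl ?mZr ?h1 ?h2 ?scaler0. Qed.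
Lemma c22D x y : c22 A e x -> c22 A e y -> c22 A e (x + y).
Proof. by case=> h1 h2 [h3 h4]; split; rewrite ?mDl ?mDr ?h1 ?h2 ?h3 ?h4 ?addr0. Qed.
Lemma c22Z k x : c22 A e x -> c22 A e (k *: x).
Proof. by case=> h1 h2; split; rewrite ?mZl ?mZr ?h1 ?h2 ?scaler0. Qed.
Lemma c22N x : c22 A e x -> c22 A e (- x).
Proof. by case=> h1 h2; split; rewrite ?mNl ?mNr ?h1 ?h2 ?oppr0. Qed.
Lemma c11_0 : c11 A e 0. Proof. by split; rewrite ?m0l ?m0r. Qed.
Lemma c21_0 : c21 A e 0. Proof. by split; rewrite ?m0l ?m0r. Qed.
End Cl.

Section PhiSec.
Variables (R : realType) (U : lmodType R[i]) (A : altStarAlg U).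
Variables (one : U) (h1l : forall x, amul A one x = x) (h1r : forall x, amul A x one = x).
Variables (W : lmodType R[i]) (B : altStarAlg W) (Phi : U -> W).
Hypothesis Phi_inj : injective Phi.
Hypothesis Phi_surj : forall w, exists x, Phi x = w.
Variables (s c : R[i]).
Hypotheses (hsc : s * c^* = c) (hc : c != 0).
Local Notation m := (amul A).
Local Notation st := (astar A).
Local Notation mB := (amul B).
Local Notation stW := (astar B).
Hypothesis hpres : forall a b, Phi (m a b + s *: m b (st a)) =
  mB (Phi a) (Phi b) + s *: mB (Phi b) (stW (Phi a)).

Definition op2 a y := m a y + s *: m y (st a).
Definition op1 b y := m y b + s *: m b (st y).

Lemma Phi0 : Phi 0 = 0.
Proof.
have [z hz] := Phi_surj 0.
have := hpres 0 z.
by rewrite hz !m0l st0 !m0r !scaler0 !addr0.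
Qed.

Definition transfers (op : U -> U) := forall S x1 x2 x3 x4,
  Phi S = Phi x1 + Phi x2 + Phi x3 + Phi x4 ->
  Phi (op S) = Phi (op x1) + Phi (op x2) + Phi (op x3) + Phi (op x4).

Lemma tr_op2 a : transfers (op2 a).
Proof.
move=> S x1 x2 x3 x4 hS; rewrite /op2 !hpres hS.
rewrite !mDr !mDl; exact: regroup.
Qed.

Lemma tr_op1 b : transfers (op1 b).
Proof.
move=> S x1 x2 x3 x4 hS; rewrite /op1 !hpres hS.
rewrite !astarD !mDr !mDl; exact: regroup.
Qed.

Lemma tr_comp f g : transfers f -> transfers g -> transfers (fun y => g (f y)).
Proof. by move=> hf hg S x1 x2 x3 x4 hS; apply: hg; apply: hf. Qed.

Definition addf (op : U -> U) := forall x y, op (x + y) = op x + op y.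

Lemma op2D a : addf (op2 a).
Proof.
move=> x y; rewrite /op2 mDr mDl scalerDr.
exact: addrACA.
Qed.

Lemma op1D b : addf (op1 b).
Proof.
move=> x y; rewrite /op1 mDl astarD mDr scalerDr.
exact: addrACA.
Qed.

Lemma addf_comp f g : addf f -> addf g -> addf (fun y => g (f y)).
Proof. by move=> hf hg x y; rewrite hf hg. Qed.

Lemma addf0 op : addf op -> op 0 = 0.
Proof. by move=> h; apply/(addrI (op 0)); rewrite -h !addr0. Qed.

Lemma iso_gen op (P Q1 Q2 Q3 : U -> Prop) : transfers op -> addf op ->
  (forall y, Q1 y -> op y = 0) -> (forall y, Q2 y -> op y = 0) ->
  (forall y, Q3 y -> op y = 0) ->
  (forall y1 y2, P y1 -> P y2 -> op y1 = op y2 -> y1 = y2) ->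
  forall S y1 y2 y3 y4 x1 x2 x3 x4, S = y1 + y2 + y3 + y4 ->
  P y1 -> Q1 y2 -> Q2 y3 -> Q3 y4 -> P x1 -> Q1 x2 -> Q2 x3 -> Q3 x4 ->
  Phi S = Phi x1 + Phi x2 + Phi x3 + Phi x4 -> y1 = x1.
Proof.
move=> htr had hq1 hq2 hq3 hinj S y1 y2 y3 y4 x1 x2 x3 x4 hS
  py1 qy2 qy3 qy4 px1 qx2 qx3 qx4 hPhi.
have h := htr _ _ _ _ _ hPhi.
rewrite hS !had (hq1 _ qy2) (hq2 _ qy3) (hq3 _ qy4) !addr0 in h.
rewrite (hq1 _ qx2) (hq2 _ qx3) (hq3 _ qx4) Phi0 !addr0 in h.
exact: hinj py1 px1 (Phi_inj h).
Qed.

Lemma op2_self f z : st f = f -> op2 (c *: f) z = c *: (m f z + m z f).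
Proof. by move=> hf; rewrite /op2 astarZ hf mZl mZr scalerA hsc scalerDr. Qed.

Section Proj.
Variables (e : U) (est : st e = e) (ee : m e e = e).
Local Notation G := (op2 (c *: e)).
Local Notation F := (op1 (one - e)).
Local Notation K := (op2 (c *: (e - (one - e)))).

Lemma G11 y : c11 A e y -> G y = c *: (y + y).
Proof. by case=> h1 h2; rewrite op2_self // h1 h2. Qed.
Lemma G12 y : c12 A e y -> G y = c *: y.
Proof. by case=> h1 h2; rewrite op2_self // h1 h2 addr0. Qed.
Lemma G21 y : c21 A e y -> G y = c *: y.
Proof. by case=> h1 h2; rewrite op2_self // h1 h2 add0r. Qed.
Lemma G22 y : c22 A e y -> G y = 0.
Proof. by case=> h1 h2; rewrite op2_self // h1 h2 addr0 scaler0. Qed.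

Lemma F11 y : c11 A e y -> F y = 0.
Proof.
move=> hy; case: (st_c11 est hy) => h1' h2'; case: hy => h1 h2.
by rewrite /op1 (p2r h1r) (p2l h1l) h2 h1' !subrr scaler0 addr0.
Qed.
Lemma F12 y : c12 A e y -> F y = y + s *: st y.
Proof.
move=> hy; case: (st_c12 est hy) => h1' h2'; case: hy => h1 h2.
by rewrite /op1 (p2r h1r) (p2l h1l) h2 h1' !subr0.
Qed.
Lemma F21 y : c21 A e y -> F y = 0.
Proof.
move=> hy; case: (st_c21 est hy) => h1' h2'; case: hy => h1 h2.
by rewrite /op1 (p2r h1r) (p2l h1l) h2 h1' !subrr scaler0 addr0.
Qed.
Lemma F22 y : c22 A e y -> F y = y + s *: st y.
Proof.
move=> hy; case: (st_c22 est hy) => h1' h2'; case: hy => h1 h2.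
by rewrite /op1 (p2r h1r) (p2l h1l) h2 h1' !subr0.
Qed.

Lemma stf : st (e - (one - e)) = e - (one - e).
Proof. by rewrite stB (st_p2 h1r est) est. Qed.

Lemma K11 y : c11 A e y -> K y = c *: (y + y).
Proof.
case=> h1 h2; rewrite op2_self ?stf //.
by rewrite mBl mBr (p2l h1l) (p2r h1r) h1 h2 subrr !subr0.
Qed.
Lemma K12 y : c12 A e y -> K y = 0.
Proof.
case=> h1 h2; rewrite op2_self ?stf //.
by rewrite mBl mBr (p2l h1l) (p2r h1r) h1 h2 subrr !subr0 sub0r subrr scaler0.
Qed.
Lemma K21 y : c21 A e y -> K y = 0.
Proof.
case=> h1 h2; rewrite op2_self ?stf //.
by rewrite mBl mBr (p2l h1l) (p2r h1r) h1 h2 subrr !subr0 sub0r addNr scaler0.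
Qed.
Lemma K22 y : c22 A e y -> K y = c *: (- y + - y).
Proof.
case=> h1 h2; rewrite op2_self ?stf //.
by rewrite mBl mBr (p2l h1l) (p2r h1r) h1 h2 !subr0 !sub0r.
Qed.

Lemma GF12 y : c12 A e y -> G (F y) = c *: y + c *: (s *: st y).
Proof.
move=> hy; rewrite F12 // op2D (G12 hy) G21 //.
by apply: c21Z; apply: st_c12.
Qed.

Lemma iso12 S y11 y12 y21 y22 x11 x12 x21 x22 :
  S = y11 + y12 + y21 + y22 ->
  c11 A e y11 -> c12 A e y12 -> c21 A e y21 -> c22 A e y22 ->
  c11 A e x11 -> c12 A e x12 -> c21 A e x21 -> c22 A e x22 ->
  Phi S = Phi x11 + Phi x12 + Phi x21 + Phi x22 -> y12 = x12.
Proof.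
move=> hS a1 a2 a3 a4 b1 b2 b3 b4 hP.
have add0 := addf0 (op2D (c *: e)).
apply: (@iso_gen (fun y => G (F y)) (c12 A e) (c11 A e) (c21 A e) (c22 A e)
   (tr_comp (tr_op1 _) (tr_op2 _)) (addf_comp (op1D _) (op2D _))
   _ _ _ _ S y12 y11 y21 y22 x12 x11 x21 x22) => //.
- by move=> y hy; rewrite F11 // add0.
- by move=> y hy; rewrite F21 // add0.
- move=> y hy; rewrite F22 // op2D G22 // G22 ?addr0 //.
  by apply: c22Z; apply: st_c22.
- move=> z1 z2 hz1 hz2; rewrite (GF12 hz1) (GF12 hz2) => h.
  have := congr1 (m e) h; rewrite !mDr !mZr.
  case: (hz1) => -> _; case: (hz2) => -> _.
  case: (st_c12 est hz1) => -> _; case: (st_c12 est hz2) => -> _.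
  by rewrite !scaler0 !addr0; apply: scalerI.
- by rewrite hS (addrC y11 y12).
- by rewrite (addrC (Phi x12) (Phi x11)).
Qed.

Lemma iso11 S y11 y12 y21 y22 x11 x12 x21 x22 :
  S = y11 + y12 + y21 + y22 ->
  c11 A e y11 -> c12 A e y12 -> c21 A e y21 -> c22 A e y22 ->
  c11 A e x11 -> c12 A e x12 -> c21 A e x21 -> c22 A e x22 ->
  Phi S = Phi x11 + Phi x12 + Phi x21 + Phi x22 -> y11 = x11.
Proof.
move=> hS a1 a2 a3 a4 b1 b2 b3 b4 hP.
have add0 := addf0 (op2D (c *: e)).
apply: (@iso_gen (fun y => G (K y)) (c11 A e) (c12 A e) (c21 A e) (c22 A e)
   (tr_comp (tr_op2 _) (tr_op2 _)) (addf_comp (op2D _) (op2D _))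
   _ _ _ _ S y11 y12 y21 y22 x11 x12 x21 x22) => //.
- by move=> y hy; rewrite K12 // add0.
- by move=> y hy; rewrite K21 // add0.
- move=> y hy; rewrite K22 // G22 //.
  by apply: c22Z; apply: c22D; apply: c22N.
- move=> z1 z2 hz1 hz2; rewrite (K11 hz1) (K11 hz2).
  rewrite G11; last by apply: c11Z; apply: c11D.
  rewrite G11; last by apply: c11Z; apply: c11D.
  move/(scalerI hc)/dbl_inj/(scalerI hc)/dbl_inj; done.
Qed.

End Proj.

Lemma CA e (est : st e = e) (ee : m e e = e) x11 x12 x21 x22 :
  c11 A e x11 -> c12 A e x12 -> c21 A e x21 -> c22 A e x22 ->
  Phi (x11 + x12 + x21 + x22) = Phi x11 + Phi x12 + Phi x21 + Phi x22.
Proof.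
move=> b1 b2 b3 b4.
have [S hS] := Phi_surj (Phi x11 + Phi x12 + Phi x21 + Phi x22).
have [y11 [y12 [y21 [y22 [a1 a2 a3 a4 hSy]]]]] := decomp ee S.
have E12 := iso12 est hSy a1 a2 a3 a4 b1 b2 b3 b4 hS.
have E11 := iso11 est hSy a1 a2 a3 a4 b1 b2 b3 b4 hS.
have est' := st_p2 h1r est.
have hSy' : S = y22 + y21 + y12 + y11 by rewrite hSy rev4.
have hS' : Phi S = Phi x22 + Phi x21 + Phi x12 + Phi x11 by rewrite hS rev4.
have E21 := iso12 est' hSy' (c22_p2 h1l h1r a4) (c21_p2 h1l h1r a3)
  (c12_p2 h1l h1r a2) (c11_p2 h1l h1r a1) (c22_p2 h1l h1r b4)
  (c21_p2 h1l h1r b3) (c12_p2 h1l h1r b2) (c11_p2 h1l h1r b1) hS'.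
have E22 := iso11 est' hSy' (c22_p2 h1l h1r a4) (c21_p2 h1l h1r a3)
  (c12_p2 h1l h1r a2) (c11_p2 h1l h1r a1) (c22_p2 h1l h1r b4)
  (c21_p2 h1l h1r b3) (c12_p2 h1l h1r b2) (c11_p2 h1l h1r b1) hS'.
by rewrite -hS hSy E11 E12 E21 E22.
Qed.

Lemma mainL e (est : st e = e) (ee : m e e = e) a b : c12 A e a -> c12 A e b ->
  Phi (m a b + s *: st a) = Phi (m a b) + Phi (s *: st a).
Proof.
move=> ha hb.
have hu := prod_12_12 ha hb.
have hv := st_c12 est ha.
have hw := prod_12_21 hb hv.
have c22_0 : c22 A e 0 by split; rewrite ?m0l ?m0r.
have c12_0 : c12 A e 0 by split; rewrite ?m0l ?m0r.
have hp2 : c22 A e (one - e) by split; rewrite ?(p2l h1l) ?(p2r h1r) ee subrr.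
have add0 := addf0 (op2D a).
have H1 := CA est ee (c11_0 A e) hb (c21_0 A e) hp2.
have H2 := tr_op2 a H1.
rewrite add0r addr0 (op2D a b (one - e)) add0 Phi0 add0r addr0 in H2.
rewrite /op2 (p2r h1r) (p2l h1l) in H2.
case: (ha) => _ hae; case: (hv) => hev _.
rewrite hae hev !subr0 in H2.
have H3 := CA est ee (c11_0 A e) ha (c21Z s hv) c22_0.
rewrite add0r addr0 Phi0 add0r addr0 in H3.
have H4 := CA est ee (c11Z s hw) c12_0 hu c22_0.
rewrite addr0 addr0 Phi0 addr0 addr0 in H4.
have H5 := CA est ee (c11Z s hw) ha (c21D hu (c21Z s hv)) c22_0.
rewrite Phi0 !addr0 in H5.
rewrite (addrC (s *: m b (st a)) (m a b)) in H4.
have eq : s *: m b (st a) + a + (m a b + s *: st a) =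
          m a b + s *: m b (st a) + (a + s *: st a).
  by rewrite (addrC (m a b) (s *: m b (st a)))
     (addrACA (s *: m b (st a)) (m a b) a (s *: st a)).
rewrite eq H2 H3 H4 in H5.
apply: (addrI (Phi (s *: m b (st a)) + Phi a)); rewrite -H5.
by rewrite (addrACA (Phi (s *: m b (st a))) (Phi (m a b)) (Phi a) (Phi (s *: st a))).
Qed.

End PhiSec.

Lemma ci_conj (R : realType) : (-1) * ('i : R[i])^* = 'i.
Proof.
apply/eqP; rewrite eq_complex /=.
by rewrite !(mulr0, mul0r, oppr0, subr0, mulrNN, mulr1, mulN1r, opprK, addr0, eqxx).
Qed.

Lemma ci_neq0 (R : realType) : ('i : R[i]) != 0.
Proof. by rewrite eq_complex /= oner_eq0 andbF. Qed.

Theorem claim2p5 (R : realType) (V : completeNormedModType R[i])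
  (A : altWfactor V) (W : lmodType R[i]) (B : altStarAlg W)
  (Phi : V -> W) (Phi_bij : bijective Phi)
  (p1 : V) (p1_proj : is_projection A p1) (p1_neq1 : p1 <> wf_one A)
  (a12 b12 c21 d21 : V)
  (ha12 : peirce A p1 (wf_one A - p1) a12)
  (hb12 : peirce A p1 (wf_one A - p1) b12)
  (hc21 : peirce A (wf_one A - p1) p1 c21)
  (hd21 : peirce A (wf_one A - p1) p1 d21) :
  (preserves_jplus A B Phi ->
     Phi (amul A a12 b12 + astar A a12) = Phi (amul A a12 b12) + Phi (astar A a12) /\
     Phi (amul A c21 d21 + astar A c21) = Phi (amul A c21 d21) + Phi (astar A c21)) /\
  (preserves_jminus A B Phi ->
     Phi (amul A a12 b12 - astar A a12) = Phi (amul A a12 b12) + Phi (- astar A a12) /\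
     Phi (amul A c21 d21 - astar A c21) = Phi (amul A c21 d21) + Phi (- astar A c21)).
Proof.
have [g gK Kg] := Phi_bij.
have inj : injective Phi := can_inj gK.
have surj : forall w, exists x, Phi x = w by move=> w; exists (g w).
case: p1_proj => _ p1st p1p1.
have h1l := wf_mul1l A; have h1r := wf_mul1r A.
have ha := peirce_c12 h1r p1p1 ha12.
have hb := peirce_c12 h1r p1p1 hb12.
have est' := st_p2 h1r p1st.
have ee' := p2p2 h1l h1r p1p1.
have hc' : peirce A (wf_one A - p1) (wf_one A - (wf_one A - p1)) c21 by rewrite subKr.
have hd' : peirce A (wf_one A - p1) (wf_one A - (wf_one A - p1)) d21 by rewrite subKr.
have hc := peirce_c12 h1r ee' hc'.
have hd := peirce_c12 h1r ee' hd'.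
split => hP.
- have hpres : forall a b, Phi (amul A a b + 1 *: amul A b (astar A a)) =
      amul B (Phi a) (Phi b) + 1 *: amul B (Phi b) (astar B (Phi a)).
    by move=> a b; rewrite !scale1r; exact: hP.
  have hsc : (1 : R[i]) * 1^* = 1.
    apply/eqP; rewrite eq_complex /=.
    by rewrite !(mulr0, mul0r, oppr0, subr0, mulr1, addr0, eqxx).
  have hc1 : (1 : R[i]) != 0 := oner_neq0 _.
  split.
  + have := mainL h1l h1r inj surj hsc hc1 hpres p1st p1p1 ha hb.
    by rewrite !scale1r.
  + have := mainL h1l h1r inj surj hsc hc1 hpres est' ee' hc hd.
    by rewrite !scale1r.
- have hpres : forall a b, Phi (amul A a b + (-1) *: amul A b (astar A a)) =
      amul B (Phi a) (Phi b) + (-1) *: amul B (Phi b) (astar B (Phi a)).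
    by move=> a b; rewrite !scaleN1r; exact: hP.
  have hsc := ci_conj R.
  have hci := ci_neq0 R.
  split.
  + have := mainL h1l h1r inj surj hsc hci hpres p1st p1p1 ha hb.
    by rewrite !scaleN1r.
  + have := mainL h1l h1r inj surj hsc hci hpres est' ee' hc hd.
    by rewrite !scaleN1r.
Qed.
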